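(* Let $\mathcal{V}=[0,1]_\oplus$, let $X$ be a set, and let $T$ be either the powerset monad $\mathcal{P}$ with evaluation map $\mathit{ev}_T=\sup$ (with $\sup\emptyset=0$), or the countably supported distribution monad $\mathcal{D}$ with evaluation map $\mathit{ev}_T=\mathbb{E}$ (expected value, $\mathbb{E}(p)=\sum_v v\cdot p(v)$). Let $F$ be a functor and $(TX,\mu_X,c)$ an $F$-$T$-bialgebra for some natural transformation $\zeta\colon TF\Rightarrow FT$, where $\mu$ is the multiplication of $T$. Let $u$ be the up-to function on maps $d\colon TX\times TX\to[0,1]$ given by $u(d)(y_1,y_2)=\inf\{K_{\{\mathit{ev}_T\}}(d)(t_1,t_2)\mid t_1,t_2\in TTX,\ \mu_X(t_1)=y_1,\ \mu_X(t_2)=y_2\}$. Then for every $d\colon TX\times TX\to[0,1]$: (i) if $T=\mathcal{P}$: $u(d)\big(\bigcup_{i\in I}X_i,\bigcup_{i\in I}Y_i\big)\le\sup_{i\in I}d(X_i,Y_i)$ for every family $(X_i,Y_i)_{i\in I}$ of pairs of subsets of $X$; (ii) if $T=\mathcal{D}$: $u(d)\big(\sum_{i\in I}r_i\cdot p_i,\sum_{i\in I}r_i\cdot q_i\big)\le\sum_{i\in I}r_i\cdot d(p_i,q_i)$ for every countable family of $r_i\in[0,1]$ with $\sum_{i\in I}r_i=1$ and $p_i,q_i\in\mathcal{D}(X)$. (Here $\le$ and $\inf$, $\sup$ refer to the usual order on the reals.)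
   Context: $[0,1]_\oplus$ is the quantale on $[0,1]$ with reversed order ($a\sqsubseteq b$ iff $a\ge b$) and truncated addition $a\oplus b=\min(a+b,1)$; its residuation is $d_{\mathcal{V}}(a,b)=\max(b-a,0)$, and quantale joins are real infima. For a map $d\colon Y\times Y\to[0,1]$, $\gamma_Y(d)=\{p\colon Y\to[0,1]\mid d_{\mathcal{V}}(p(y_1),p(y_2))\le d(y_1,y_2)\ \forall y_1,y_2\}$, and $K_{\{\mathit{ev}_T\}}(d)(t_1,t_2)=\sup_{p\in\gamma_Y(d)}d_{\mathcal{V}}(\mathit{ev}_T(Tp(t_1)),\mathit{ev}_T(Tp(t_2)))$ for $t_1,t_2\in TY$. $\mathcal{D}(X)$ is the set of probability distributions on $X$ with countable support, with $\mathcal{D}f(p)(y)=\sum_{f(x)=y}p(x)$, unit the Dirac distributions and multiplication $\mu(P)(x)=\sum_\nu P(\nu)\nu(x)$. An $F$-$T$-bialgebra for $\zeta$ is a triple $(Y,a,c)$ with $a\colon TY\to Y$, $c\colon Y\to FY$ and $c\circ a=Fa\circ\zeta_Y\circ Tc$. *)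

(* Defs.v *)
From HB Require Import structures.
From mathcomp Require Import all_boot all_order all_algebra.
From mathcomp Require Import all_classical all_reals all_analysis.
Set Implicit Arguments. Unset Strict Implicit. Unset Printing Implicit Defensive.
Import Order.TTheory GRing.Theory Num.Theory.
Local Open Scope classical_set_scope.
Local Open Scope ring_scope.

(* Residuation of the quantale [0,1]_oplus : d_V(a,b) = max(b - a, 0). *)
Definition dV {R : realType} (a b : R) : R := Num.max (b - a) 0.

Definition Pmap {X Y : Type} (f : X -> Y) (A : set X) : set Y := f @` A.
Definition Pmu {X : Type} (t : set (set X)) : set X := \bigcup_(A in t) A.
(* evaluation map ev_P = sup on subsets of [0,1], with sup(empty) = 0
   (the real [sup] of MathComp-Analysis satisfies sup set0 = 0). *)
Definition evP {R : realType} (A : set R) : R := sup A.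

Definition gammaP {R : realType} {X : Type} (d : set X -> set X -> R)
  : set (set X -> R) :=
  [set p | (forall A, 0 <= p A <= 1) /\
           (forall A B, dV (p A) (p B) <= d A B)].

Definition KP {R : realType} {X : Type} (d : set X -> set X -> R)
  (t1 t2 : set (set X)) : \bar R :=
  ereal_sup [set (dV (evP (Pmap p t1)) (evP (Pmap p t2)))%:E | p in gammaP d].

Definition uP {R : realType} {X : Type} (d : set X -> set X -> R)
  (y1 y2 : set X) : \bar R :=
  ereal_inf [set k | exists t1 t2 : set (set X),
     [/\ Pmu t1 = y1, Pmu t2 = y2 & k = KP d t1 t2]].

Definition is_distr {R : realType} {X : choiceType} (p : X -> R) : Prop :=
  [/\ (forall x, 0 <= p x),
      countable [set x | p x != 0] &
      (\esum_(x in [set: X]) (p x)%:E = 1)%E].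

Record distr (R : realType) (X : choiceType) := Distr {
  pmf :> X -> R ;
  pmf_is_distr : is_distr pmf }.

HB.instance Definition _ (R : realType) (X : choiceType) :=
  gen_eqMixin (distr R X).
HB.instance Definition _ (R : realType) (X : choiceType) :=
  gen_choiceMixin (distr R X).

Definition Dmap_fun {R : realType} {X Y : choiceType} (f : X -> Y)
  (p : X -> R) : Y -> R :=
  fun y => fine (\esum_(x in [set x | f x = y]) (p x)%:E).

Definition Dmu_fun {R : realType} {X : choiceType}
  (P : distr R (distr R X)) : X -> R :=
  fun x => fine (\esum_(nu in [set: distr R X]) (P nu * nu x)%:E).

Definition Ev {R : realType} (q : R -> R) : R :=
  fine (\esum_(v in [set v : R | 0 <= v <= 1]) (v * q v)%:E).

Definition gammaD {R : realType} {X : choiceType}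
  (d : distr R X -> distr R X -> R) : set (distr R X -> R) :=
  [set p | (forall y, 0 <= p y <= 1) /\
           (forall y1 y2, dV (p y1) (p y2) <= d y1 y2)].

Definition KD {R : realType} {X : choiceType}
  (d : distr R X -> distr R X -> R) (t1 t2 : distr R (distr R X)) : \bar R :=
  ereal_sup [set (dV (Ev (Dmap_fun p t1)) (Ev (Dmap_fun p t2)))%:E
            | p in gammaD d].

Definition uD {R : realType} {X : choiceType}
  (d : distr R X -> distr R X -> R) (y1 y2 : distr R X) : \bar R :=
  ereal_inf [set k | exists t1 t2 : distr R (distr R X),
     [/\ (forall x, Dmu_fun t1 x = y1 x), (forall x, Dmu_fun t2 x = y2 x)
       & k = KD d t1 t2]].

(* Main.v *)
Set Warnings "-all".
Require Import Defs.
From HB Require Import structures.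
From mathcomp Require Import all_boot all_order all_algebra.
From mathcomp Require Import all_classical all_reals all_analysis.
From mathcomp Require Import lra.
Import Order.TTheory GRing.Theory Num.Theory.
Local Open Scope classical_set_scope.
Local Open Scope ring_scope.
Section H.
Context {R : realType}.
Local Open Scope ereal_scope.

Lemma esumZ (T : choiceType) (S : set T) (a : T -> \bar R) (c : R) :
  (0 <= c)%R -> (forall x, S x -> 0 <= a x) ->
  \esum_(x in S) (c%:E * a x) = c%:E * \esum_(x in S) a x.
Proof.
move=> c0 a0; rewrite /esum -ereal_supZl//; last first.
  by apply/set0P; exists (\sum_(x \in set0) a x); exists set0 => //; exact: fsets_set0.
rewrite image_comp; congr ereal_sup; apply: eq_imagel => A [finA AS] /=.
rewrite !fsbig_finite// big_seq [in RHS]big_seq ge0_sume_distrr// => i.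
by rewrite in_fset_set// inE => /AS/a0.
Qed.


Lemma esum_sub (T : choiceType) (A B : set T) (a : T -> \bar R) :
  A `<=` B -> \esum_(x in A) a x <= \esum_(x in B) a x.
Proof.
move=> AB; apply: ereal_sup_le => _ [F [finF FA] <-]; exists F => //.
by split => // x /FA /AB.
Qed.

Lemma esum_fin (T : choiceType) (r : T -> R) (A : set T) (a : T -> R) :
  (forall i, 0 <= r i)%R -> \esum_(i in [set: T]) (r i)%:E = 1 ->
  (forall i, 0 <= a i <= 1)%R ->
  \esum_(i in A) (r i * a i)%:E \is a fin_num.
Proof.
move=> r0 r1 a01; rewrite ge0_fin_numE; last first.
  by apply: esum_ge0 => i _; rewrite lee_fin mulr_ge0//; case/andP: (a01 i).
apply: (@le_lt_trans _ _ (\esum_(i in [set: T]) (r i)%:E)); last by rewrite r1 ltry.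
have h := @esum_sub T A setT (fun i => (r i * a i)%:E) (subsetT A).
apply: le_trans h _.
apply: le_esum => i _; rewrite lee_fin -[leRHS]mulr1 ler_wpM2l//.
by case/andP: (a01 i).
Qed.

Lemma esum_push (I Y : choiceType) (f : I -> Y) (r : I -> R) (S : set Y) (g : Y -> R) :
  (forall i, 0 <= r i)%R -> \esum_(i in [set: I]) (r i)%:E = 1 ->
  (forall y, S y -> 0 <= g y)%R ->
  \esum_(y in S) (Dmap_fun f r y * g y)%:E =
  \esum_(i in f @^-1` S) (r i * g (f i))%:E.
Proof.
move=> r0 r1 g0.
have fin y : \esum_(i in [set i | f i = y]) (r i)%:E \is a fin_num.
  have := @esum_fin _ r [set i | f i = y] (fun=> 1%R) r0 r1.
  rewrite /=; under eq_esum do rewrite mulr1; apply => i; by rewrite ler01 lexx.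
transitivity ((\esum_(y in S) \esum_(i in [set i | f i = y]) (r i * g (f i))%:E)%E).
  apply: eq_esum => y Sy; have gy := g0 y Sy.
  rewrite /Dmap_fun EFinM fineK// muleC -esumZ//; last by move=> i _; rewrite lee_fin.
  by apply: eq_esum => i /= <-; rewrite muleC -EFinM.
rewrite (esum_esum (J := fun y => [set i | f i = y]) (a := fun y i => (r i * g (f i))%:E)); last first.
  by move=> y i Sy /= fy; rewrite lee_fin mulr_ge0// g0// fy.
rewrite (reindex_esum (f @^-1` S) _ (fun i => (f i, i)))//; split.
- by move=> i Si; split.
- by move=> i j _ _ [].
- by move=> [y i] [Sy /= fy]; exists i => //=; rewrite /preimage /= fy.
Qed.

Lemma Dmap_distr (I Y : choiceType) (f : I -> Y) (r : I -> R) :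
  (forall i, 0 <= r i)%R -> countable [set: I] ->
  \esum_(i in [set: I]) (r i)%:E = 1 -> is_distr (Dmap_fun f r).
Proof.
move=> r0 cI r1; split.
- by move=> y; apply: fine_ge0; apply: esum_ge0 => i _; rewrite lee_fin.
- apply: (sub_countable _ (sub_countable (card_image_le f [set: I]) cI)).
  apply: subset_card_le => y /= hy.
  have [[i fi]|nf] := pselect (exists i, f i = y); first by exists i.
  move: hy; rewrite /Dmap_fun (_ : [set x | f x = y] = set0) ?esum_set0 ?eqxx//.
  by apply/seteqP; split => // i /= fi; apply: nf; exists i.
- transitivity (\esum_(y in [set: Y]) (Dmap_fun f r y * 1)%:E)%E.
    by apply: eq_esum => y _; rewrite mulr1.
  rewrite (@esum_push I Y f r [set: Y] (fun=> 1%R) r0 r1 (fun _ _ => ler01)) -r1.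
  by apply: eq_esum => i _; rewrite mulr1.
Qed.
End H.
Lemma partP (R : realType) (X : choiceType) :
  (forall d : set X -> set X -> R,
     (forall A B, 0 <= d A B <= 1) ->
     forall (I : Type) (Xs Ys : I -> set X),
       (uP d (\bigcup_(i in [set: I]) Xs i) (\bigcup_(i in [set: I]) Ys i)
        <= (sup [set d (Xs i) (Ys i) | i in [set: I]])%:E)%E).
Proof.
move=> d d01 I Xs Ys.
pose t1 := [set Xs i | i in [set: I]]; pose t2 := [set Ys i | i in [set: I]].
have mu (Zs : I -> set X) : Pmu [set Zs i | i in [set: I]] = \bigcup_(i in [set: I]) Zs i.
  apply/seteqP; split=> x.
    by move=> [A [i _ <-] Ax]; exists i.
  by move=> [i _ Zx]; exists (Zs i) => //; exists i.
apply: (@le_trans _ _ (KP d t1 t2)).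
  by apply: ereal_inf_lbound; exists t1, t2; split => //; rewrite mu.
apply: ge_ereal_sup => _ [p [p01 pd] <-].
rewrite lee_fin /dV.
have [[i0 _]|nI] := pselect (exists i : I, True); last first.
  have E (Zs : I -> set X) (f : set X -> R) : Pmap f [set Zs i | i in [set: I]] = set0.
    by apply/seteqP; split=> // y [z [i _ _] _]; case: nI; exists i.
  have -> : [set d (Xs i) (Ys i) | i in [set: I]] = set0.
    by apply/seteqP; split=> // y [i _ _]; case: nI; exists i.
  by rewrite !E sup0 subrr maxxx.
set D := [set d (Xs i) (Ys i) | i in [set: I]].
have Dub : has_ubound D by exists 1 => y [i _ <-]; case/andP: (d01 (Xs i) (Ys i)).
have D0 : 0 <= sup D.
  have h : D (d (Xs i0) (Ys i0)) by exists i0. apply: le_trans (ub_le_sup Dub h).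
  by case/andP: (d01 (Xs i0) (Ys i0)).
have Aub (Zs : I -> set X) : has_ubound (Pmap p [set Zs i | i in [set: I]]).
  by exists 1 => y [z [i _ <-] <-]; case/andP: (p01 (Zs i)).
have Ain (Zs : I -> set X) i : Pmap p [set Zs i | i in [set: I]] (p (Zs i)).
  by exists (Zs i) => //; exists i.
rewrite ge_max D0 andbT lerBlDl.
apply: ge_sup; first by exists (p (Ys i0)); apply: Ain.
move=> _ [_ [i _ <-] <-].
have h1 := ub_le_sup (Aub Xs) (Ain Xs i).
have hD : D (d (Xs i) (Ys i)) by exists i. have h2 := ub_le_sup Dub hD.
have h3 := pd (Xs i) (Ys i).
move: h3; rewrite /dV ge_max => /andP[h3 _].
have := lerD h1 h2. rewrite /evP /t1; lra.
Qed.
Lemma partD (R : realType) (X : choiceType) :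
  (forall d : distr R X -> distr R X -> R,
     (forall p q, 0 <= d p q <= 1) ->
     forall (I : choiceType) (r : I -> R) (ps qs : I -> distr R X)
            (y1 y2 : distr R X),
       countable [set: I] ->
       (forall i, 0 <= r i <= 1) ->
       (\esum_(i in [set: I]) (r i)%:E = 1)%E ->
       (forall x, y1 x = fine (\esum_(i in [set: I]) (r i * ps i x)%:E)) ->
       (forall x, y2 x = fine (\esum_(i in [set: I]) (r i * qs i x)%:E)) ->
       (uD d y1 y2 <= \esum_(i in [set: I]) (r i * d (ps i) (qs i))%:E)%E).
Proof.
move=> d d01 I r ps qs y1 y2 cI r01 r1 hy1 hy2.
have r0 i : 0 <= r i by case/andP: (r01 i).
pose T (zs : I -> distr R X) := Distr (@Dmap_distr R I _ zs r r0 cI r1).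
have mu (zs : I -> distr R X) (y : distr R X) :
    (forall x, y x = fine (\esum_(i in [set: I]) (r i * zs i x)%:E)) ->
    forall x, Dmu_fun (T zs) x = y x.
  move=> hy x; rewrite hy /Dmu_fun /=; congr fine.
  by rewrite esum_push// => nu _; case: (pmf_is_distr nu).
apply: (@le_trans _ _ (KD d (T ps) (T qs))).
  by apply: ereal_inf_lbound; exists (T ps), (T qs); split => //; apply: mu.
apply: ge_ereal_sup => _ [p [p01 pd] <-].
have Ev_eq (zs : I -> distr R X) :
    Ev (Dmap_fun p (T zs)) = fine (\esum_(i in [set: I]) (r i * p (zs i))%:E).
  rewrite /Ev; congr fine.
  transitivity (\esum_(v in [set v : R | (0 <= v <= 1)%R]) (Dmap_fun (p \o zs) r v * v)%R%:E)%E.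
    apply: eq_esum => v _; rewrite mulrC; congr (EFin (_ * _)%R).
    rewrite /Dmap_fun; congr fine.
    transitivity (\esum_(nu in [set nu | p nu = v]) (Dmap_fun zs r nu * 1)%:E)%E.
      by apply: eq_esum => nu _; rewrite mulr1.
    by rewrite esum_push//; apply: eq_esum => i _; rewrite mulr1.
  rewrite esum_push// => [|v /andP[]//].
  rewrite (_ : _ @^-1` _ = [set: I]) //.
  by apply/seteqP; split => // i _; exact: p01.
rewrite !Ev_eq.
set A := (\esum_(i in _) (r i * p (ps i))%:E)%E.
set B := (\esum_(i in _) (r i * p (qs i))%:E)%E.
set D := (\esum_(i in _) (r i * d (ps i) (qs i))%:E)%E.
have finA : A \is a fin_num by apply: esum_fin.
have finB : B \is a fin_num by apply: esum_fin.
have finD : D \is a fin_num by apply: esum_fin.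
have hB : (B <= A + D)%E.
  rewrite /A /D -esumD; last 2 first.
  - by move=> i _; rewrite lee_fin mulr_ge0//; case/andP: (p01 (ps i)).
  - by move=> i _; rewrite lee_fin mulr_ge0//; case/andP: (d01 (ps i) (qs i)).
  apply: le_esum => i _; rewrite -EFinD lee_fin -mulrDr ler_wpM2l//.
  have := pd (ps i) (qs i); rewrite /dV ge_max => /andP[h _]; lra.
have D0 : 0 <= fine D.
  by apply: fine_ge0; apply: esum_ge0 => i _; rewrite lee_fin mulr_ge0//; case/andP: (d01 (ps i) (qs i)).
move: hB; rewrite -(fineK finA) -(fineK finB) -(fineK finD) -EFinD !lee_fin => hB.
by rewrite /dV ge_max D0 andbT; lra.
Qed.
Theorem mainTheorem15 (R : realType) (X : choiceType) :
  (* (i) T = P, ev = sup *)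
  (forall d : set X -> set X -> R,
     (forall A B, 0 <= d A B <= 1) ->
     forall (I : Type) (Xs Ys : I -> set X),
       (uP d (\bigcup_(i in [set: I]) Xs i) (\bigcup_(i in [set: I]) Ys i)
        <= (sup [set d (Xs i) (Ys i) | i in [set: I]])%:E)%E)
  /\
  (* (ii) T = D, ev = expected value *)
  (forall d : distr R X -> distr R X -> R,
     (forall p q, 0 <= d p q <= 1) ->
     forall (I : choiceType) (r : I -> R) (ps qs : I -> distr R X)
            (y1 y2 : distr R X),
       countable [set: I] ->
       (forall i, 0 <= r i <= 1) ->
       (\esum_(i in [set: I]) (r i)%:E = 1)%E ->
       (forall x, y1 x = fine (\esum_(i in [set: I]) (r i * ps i x)%:E)) ->
       (forall x, y2 x = fine (\esum_(i in [set: I]) (r i * qs i x)%:E)) ->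
       (uD d y1 y2 <= \esum_(i in [set: I]) (r i * d (ps i) (qs i))%:E)%E).
Proof.
split; [exact: partP | exact: partD].
Qed.
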